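(* Let $\Gamma$ be a finite, compact, connected, bipartite metric graph with first Betti number $\beta$, and let $B\subset\partial\Gamma$ be nonempty. Then $$\dim\ker L^{\rm st,D}(\Gamma,B)=0\qquad\text{and}\qquad\dim\ker L^{\rm a/st,N}(\Gamma,B)=\beta+|B|-1.$$
   Context: A finite compact metric graph $\Gamma$ consists of finitely many edges $e_n=[x_{2n-1},x_{2n}]\subset\mathbb R$, $n=1,\dots,E$, of positive lengths and a vertex set $\mathcal V=\{v_1,\dots,v_V\}$ which is a partition of the set of all edge endpoints; the degree of a vertex is the number of endpoints it contains (loops count twice); $\partial\Gamma$ is the set of vertices of degree one; $\beta=E-V+1$. $\Gamma$ is bipartite if $\mathcal V=\mathcal V_1\sqcup\mathcal V_2$ with every edge having one endpoint in a vertex of $\mathcal V_1$ and the other in a vertex of $\mathcal V_2$. $f(x_j)$ denotes the limit of $f$ at endpoint $x_j$, and $\partial f(x_j)=f'(x_j)$ if $x_j$ is a left endpoint, $-f'(x_j)$ if a right endpoint. $L^{\rm st,D}(\Gamma,B)$ acts as $-f''$ on each edge with domain all $f\in W^2_2(\Gamma\setminus\mathcal V)=\bigoplus_nW^2_2(e_n)$ satisfying $f=0$ at each vertex of $B$ and standard conditions ($f(x_i)=f(x_j)$ for $x_i,x_j\in v$, $\sum_{x_j\in v}\partial f(x_j)=0$) at all other vertices $v$. $L^{\rm a/st,N}(\Gamma,B)$ acts as $-f''$ with domain all $f\in W^2_2(\Gamma\setminus\mathcal V)$ satisfying $\partial f=0$ at each vertex of $B$ and anti-standard conditions ($\sum_{x_j\in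 v}f(x_j)=0$, $\partial f(x_i)=\partial f(x_j)$ for $x_i,x_j\in v$) at all other vertices $v$. *)

(* Defs.v *)
From Stdlib Require Import Reals List Arith Lia ZArith.
Import ListNotations.
Open Scope R_scope.

(* Edge n (0 <= n < E) is the interval [a n, b n] with a n < b n.
   Endpoints are numbered 0 .. 2E-1: endpoint 2n is the left endpoint a n
   of edge n, endpoint 2n+1 is the right endpoint b n.
   vtx j (< V) is the vertex containing endpoint j; the vertex set is the
   partition of endpoints given by the fibres of vtx. *)

Definition is_metric_graph (E V : nat) (a b : nat -> R) (vtx : nat -> nat) : Prop :=
  (forall n, (n < E)%nat -> a n < b n) /\
  (forall j, (j < 2 * E)%nat -> (vtx j < V)%nat) /\
  (forall v, (v < V)%nat -> exists j, (j < 2 * E)%nat /\ vtx j = v).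

Definition endpoints_of (E : nat) (vtx : nat -> nat) (v : nat) : list nat :=
  filter (fun j => Nat.eqb (vtx j) v) (seq 0 (2 * E)).

Definition degree (E : nat) (vtx : nat -> nat) (v : nat) : nat :=
  length (endpoints_of E vtx v).

Inductive reach (E : nat) (vtx : nat -> nat) (u : nat) : nat -> Prop :=
| reach_refl : reach E vtx u u
| reach_step : forall w x n, reach E vtx u w -> (n < E)%nat ->
    ((vtx (2 * n)%nat = w /\ vtx (2 * n + 1)%nat = x) \/
     (vtx (2 * n + 1)%nat = w /\ vtx (2 * n)%nat = x)) ->
    reach E vtx u x.

Definition connected (E V : nat) (vtx : nat -> nat) : Prop :=
  forall u v, (u < V)%nat -> (v < V)%nat -> reach E vtx u v.

Definition bipartite (E : nat) (vtx : nat -> nat) : Prop :=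
  exists col : nat -> bool, forall n, (n < E)%nat ->
    col (vtx (2 * n)%nat) <> col (vtx (2 * n + 1)%nat).

Definition betti (E V : nat) : Z := (Z.of_nat E - Z.of_nat V + 1)%Z.

(* B is given by a boolean indicator on vertex indices *)
Definition card_B (V : nat) (B : nat -> bool) : nat :=
  length (filter B (seq 0 V)).

(* A function on Gamma is a family f n : R -> R (only its restriction to
   the edge [a n, b n] matters). Elements of the kernel of -d^2/dx^2 on
   W^2_2(e_n) are exactly the affine functions on e_n, i.e. restrictions of
   globally twice-differentiable functions with f'' = 0 on the open edge.
   df n is the derivative of f n. *)
Definition edge_harmonic (a b : R) (g dg : R -> R) : Prop :=
  (forall x, derivable_pt_lim g x (dg x)) /\
  (forall x, exists d2, derivable_pt_lim dg x d2) /\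
  (forall x, a < x < b -> derivable_pt_lim dg x 0).

(* value f(x_j) and normal derivative (partial f)(x_j) at endpoint j *)
Definition endval (a b : nat -> R) (f : nat -> R -> R) (j : nat) : R :=
  if Nat.even j then f (Nat.div2 j) (a (Nat.div2 j))
  else f (Nat.div2 j) (b (Nat.div2 j)).

Definition endder (a b : nat -> R) (df : nat -> R -> R) (j : nat) : R :=
  if Nat.even j then df (Nat.div2 j) (a (Nat.div2 j))
  else - df (Nat.div2 j) (b (Nat.div2 j)).

Definition sumR (l : list nat) (F : nat -> R) : R :=
  fold_right Rplus 0 (map F l).

Definition ker_stD (E V : nat) (a b : nat -> R) (vtx : nat -> nat)
    (B : nat -> bool) (f : nat -> R -> R) : Prop :=
  exists df : nat -> R -> R,
    (forall n, (n < E)%nat -> edge_harmonic (a n) (b n) (f n) (df n)) /\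
    (forall v, (v < V)%nat ->
      if B v then
        (forall j, In j (endpoints_of E vtx v) -> endval a b f j = 0)
      else
        ((forall i j, In i (endpoints_of E vtx v) -> In j (endpoints_of E vtx v) ->
            endval a b f i = endval a b f j) /\
         sumR (endpoints_of E vtx v) (endder a b df) = 0)).

Definition ker_astN (E V : nat) (a b : nat -> R) (vtx : nat -> nat)
    (B : nat -> bool) (f : nat -> R -> R) : Prop :=
  exists df : nat -> R -> R,
    (forall n, (n < E)%nat -> edge_harmonic (a n) (b n) (f n) (df n)) /\
    (forall v, (v < V)%nat ->
      if B v then
        (forall j, In j (endpoints_of E vtx v) -> endder a b df j = 0)
      else
        (sumR (endpoints_of E vtx v) (endval a b f) = 0 /\
         (forall i j, In i (endpoints_of E vtx v) -> In j (endpoints_of E vtx v) ->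
            endder a b df i = endder a b df j))).

(* equality as elements of L^2(Gamma) = (+)_n L^2(e_n) for functions
   continuous on the closed edges *)
Definition eq_on_edges (E : nat) (a b : nat -> R) (f g : nat -> R -> R) : Prop :=
  forall n x, (n < E)%nat -> a n <= x <= b n -> f n x = g n x.

Definition lincomb (d : nat) (c : nat -> R) (bs : nat -> nat -> R -> R) : nat -> R -> R :=
  fun n x => sumR (seq 0 d) (fun i => c i * bs i n x).

Definition has_dim (E : nat) (a b : nat -> R) (K : (nat -> R -> R) -> Prop) (d : nat) : Prop :=
  exists bs : nat -> nat -> R -> R,
    (forall i, (i < d)%nat -> K (bs i)) /\
    (forall f, K f -> exists c : nat -> R, eq_on_edges E a b f (lincomb d c bs)) /\
    (forall c : nat -> R, eq_on_edges E a b (lincomb d c bs) (fun _ _ => 0) ->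
        forall i, (i < d)%nat -> c i = 0).

(* Main.v *)
Require Import Defs.
From Stdlib Require Import Reals List Arith ZArith.
Open Scope R_scope.
From Stdlib Require Lia Lra.
From Coquelicot Require Derive.
From HB Require structures.
From mathcomp Require all_boot all_order all_algebra Rstruct zify.

Module Work.
From Stdlib Require Import Reals List Arith ZArith Lia Lra.
From HB Require Import structures.
From mathcomp Require Import all_boot all_order all_algebra.
From mathcomp Require Import Rstruct zify.
Import GRing.Theory Num.Theory.
Open Scope R_scope.

Lemma sumR_big (l : list nat) (F : nat -> R) : sumR l F = (\sum_(j <- l) F j)%R.
Proof. elim: l => [|x l IH]; first by rewrite big_nil. by rewrite big_cons -IH. Qed.

Lemma filter_eqL (p : nat -> bool) (l : list nat) : List.filter p l = [seq x <- l | p x].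
Proof. elim: l => [|x l IH] //=; by rewrite IH. Qed.

Lemma seq_iota m n : List.seq m n = iota m n.
Proof. elim: n m => [|n IH] m //=; by rewrite IH. Qed.

Lemma eqb_eqn x y : Nat.eqb x y = (x == y).
Proof. case: (Nat.eqb_spec x y) => [->|H]; first by rewrite eqxx. apply/esym/eqP. exact H. Qed.

Lemma sumR_endpoints E vtx v (h : nat -> R) :
  sumR (endpoints_of E vtx v) h = (\sum_(0 <= j < 2 * E | vtx j == v) h j)%R.
Proof.
rewrite sumR_big /endpoints_of filter_eqL seq_iota big_filter.
rewrite /index_iota subn0. apply: eq_bigl => j. by rewrite eqb_eqn.
Qed.

Lemma sum_pairs E (h : nat -> R) :
  (\sum_(0 <= j < 2 * E) h j = \sum_(0 <= n < E) (h (2 * n)%N + h (2 * n + 1)%N))%R.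
Proof.
elim: E => [|E IH]; first by rewrite muln0 !big_geq.
have -> : (2 * E.+1 = (2 * E).+2)%N by lia.
rewrite big_nat_recr // big_nat_recr //= IH big_nat_recr //= addrA.
by rewrite addn1.
Qed.

Lemma regroup E V (vtx : nat -> nat) (h : nat -> R) :
  (forall j, (j < 2 * E)%N -> (vtx j < V)%N) ->
  (\sum_(0 <= j < 2 * E) h j = \sum_(v < V) \sum_(0 <= j < 2 * E | vtx j == v) h j)%R.
Proof.
move=> Hv.
under [RHS]eq_bigr => v _ do rewrite big_mkcond big_mkord.
rewrite exchange_big /= big_mkord. apply: eq_bigr => j _.
rewrite -big_mkcond /=.
have Hj := Hv j (ltn_ord j).
by rewrite (big_pred1 (Ordinal Hj)) // => v; rewrite /= eq_sym.
Qed.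

Lemma sumR_ext (l : list nat) (F G : nat -> R) :
  (forall j, In j l -> F j = G j) -> sumR l F = sumR l G.
Proof.
elim: l => [|x l IH] H //=. unfold sumR in *; simpl.
rewrite H; [|left; reflexivity]. f_equal. apply IH => j Hj. apply H. right; exact Hj.
Qed.

Lemma sumR_mul (l : list nat) (c : R) (F : nat -> R) :
  sumR l (fun j => c * F j) = c * sumR l F.
Proof. elim: l => [|x l IH]; unfold sumR in *; simpl. ring. rewrite IH. ring. Qed.

Lemma in_endpoints E vtx v j : In j (endpoints_of E vtx v) <-> (j < 2 * E)%coq_nat /\ vtx j = v.
Proof.
rewrite /endpoints_of filter_In in_seq Nat.eqb_eq. lia.
Qed.

Lemma cont_of (g : R -> R) x l : derivable_pt_lim g x l -> continuity_pt g x.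
Proof. intro H. apply derivable_continuous_pt. exists l. exact H. Qed.

Lemma harm_affine a b g dg : a < b -> edge_harmonic a b g dg ->
  (forall x, a <= x <= b -> dg x = dg a) /\
  (forall x, a <= x <= b -> g x = g a + dg a * (x - a)).
Proof.
intros Hab [H1 [H2 H3]].
assert (Hd : forall x, a <= x <= b -> dg x = dg a).
{ intros x Hx. destruct (Req_dec x a) as [->|Hne]; [reflexivity|].
  destruct (Derive.MVT_gen dg a x (fun _ => 0)) as [c [_ Hc]].
  - intros y Hy. apply Derive.is_derive_Reals. apply H3.
    unfold Rmin, Rmax in Hy. destruct (Rle_dec a x); lra.
  - intros y _. destruct (H2 y) as [d2 Hd2]. exact (cont_of _ _ _ Hd2).
  - lra. }
split; [exact Hd|].
intros x Hx. destruct (Req_dec x a) as [->|Hne]; [ring|].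
destruct (Derive.MVT_gen g a x dg) as [c [Hc1 Hc]].
- intros y Hy. apply Derive.is_derive_Reals. apply H1.
- intros y _. exact (cont_of _ _ _ (H1 y)).
- rewrite (Hd c) in Hc. lra.
  unfold Rmin, Rmax in Hc1. destruct (Rle_dec a x); lra.
Qed.

Lemma R0E : (0%R : R) = 0.
Proof. reflexivity. Qed.

Lemma even_2n n : Nat.even (2 * n)%coq_nat = true.
Proof. apply Nat.even_spec. exists n. reflexivity. Qed.
Lemma even_2n1 n : Nat.even (2 * n + 1)%coq_nat = false.
Proof. rewrite <- Nat.negb_odd. assert (H : Nat.odd (2 * n + 1)%coq_nat = true).
  { apply Nat.odd_spec. exists n. reflexivity. } rewrite H. reflexivity. Qed.
Lemma div2_2n n : Nat.div2 (2 * n)%coq_nat = n.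
Proof. apply Nat.div2_double. Qed.
Lemma div2_2n1 n : Nat.div2 (2 * n + 1)%coq_nat = n.
Proof. rewrite Nat.add_1_r. apply Nat.div2_succ_double. Qed.

Lemma endval_2n a b f n : endval a b f (2 * n)%N = f n (a n).
Proof. unfold endval. change (2 * n)%N with (2 * n)%coq_nat. by rewrite even_2n div2_2n. Qed.
Lemma endval_2n1 a b f n : endval a b f (2 * n + 1)%N = f n (b n).
Proof. unfold endval. change (2 * n + 1)%N with (2 * n + 1)%coq_nat. by rewrite even_2n1 div2_2n1. Qed.
Lemma endder_2n a b f n : endder a b f (2 * n)%N = f n (a n).
Proof. unfold endder. change (2 * n)%N with (2 * n)%coq_nat. by rewrite even_2n div2_2n. Qed.
Lemma endder_2n1 a b f n : endder a b f (2 * n + 1)%N = - f n (b n).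
Proof. unfold endder. change (2 * n + 1)%N with (2 * n + 1)%coq_nat. by rewrite even_2n1 div2_2n1. Qed.

Lemma energy E V a b vtx f df :
  is_metric_graph E V a b vtx ->
  (forall n, (n < E)%coq_nat -> edge_harmonic (a n) (b n) (f n) (df n)) ->
  (forall v, (v < V)%coq_nat ->
     sumR (endpoints_of E vtx v) (fun j => endval a b f j * endder a b df j) = 0) ->
  forall n, (n < E)%coq_nat -> df n (a n) = 0.
Proof.
move=> [Hab [Hvtx _]] Hh Hv.
have Hsum : (\sum_(0 <= j < 2 * E) (endval a b f j * endder a b df j) = 0)%R.
{ rewrite (regroup E V vtx); last by move=> j Hj; apply/ltP; apply: Hvtx; apply/ltP.
  apply: big1 => v _. rewrite -sumR_endpoints. apply: Hv. apply/ltP. exact: ltn_ord. }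
rewrite sum_pairs in Hsum.
have Hsum2 : (\sum_(0 <= n < E) (df n (a n) * df n (a n) * (b n - a n)) = - \sum_(0 <= n < E) (endval a b f (2 * n)%N * endder a b df (2 * n)%N + endval a b f (2 * n + 1)%N * endder a b df (2 * n + 1)%N))%R.
{ rewrite -sumrN. apply: eq_big_nat => n /andP [_ Hn].
  have Hn' : (n < E)%coq_nat by apply/ltP.
  have [Hd Hg] := harm_affine _ _ _ _ (Hab n Hn') (Hh n Hn').
  rewrite endval_2n endval_2n1 endder_2n endder_2n1.
  rewrite (Hd (b n)); last by have := Hab n Hn'; lra.
  rewrite (Hg (b n)); last by have := Hab n Hn'; lra.
  rewrite /GRing.opp /GRing.add /GRing.mul /=. ring. }
move=> n Hn.
have Hn' : (n < E)%N by apply/ltP.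
rewrite Hsum oppr0 big_mkord in Hsum2.
have Hpos : forall i : 'I_E, xpredT i -> (0 <= df i (a i) * df i (a i) * (b i - a i))%R.
{ move=> i _. apply/RleP. have Hi : (i < E)%coq_nat by apply/ltP.
  have := Hab i Hi. rewrite /GRing.opp /GRing.add /GRing.mul /=. move=> HH. rewrite R0E. nra. }
have := @psumr_eq0P _ _ xpredT _ Hpos Hsum2 (Ordinal Hn') isT.
rewrite /= /GRing.opp /GRing.add /GRing.mul /= => H0. have := Hab n Hn.
move=> Hl. rewrite R0E in H0.
case: (Rmult_integral _ _ H0) => [H|H]; last lra. by case: (Rmult_integral _ _ H).
Qed.

Lemma endval_2n' a b f n : endval a b f (2 * n)%coq_nat = f n (a n).
Proof. exact: endval_2n. Qed.
Lemma endval_2n1' a b f n : endval a b f (2 * n + 1)%coq_nat = f n (b n).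
Proof. exact: endval_2n1. Qed.

Lemma sumR_zero (l : list nat) (F : nat -> R) : (forall j, In j l -> F j = 0) -> sumR l F = 0.
Proof.
move=> H. rewrite (sumR_ext l F (fun j => 0 * F j)); last by move=> j Hj; rewrite H //; ring.
rewrite sumR_mul. ring.
Qed.

Lemma harm_const a b g dg : a < b -> edge_harmonic a b g dg -> dg a = 0 ->
  forall x, a <= x <= b -> g x = g a.
Proof. move=> Hab Hh H0 x Hx. have [_ Hg] := harm_affine _ _ _ _ Hab Hh. rewrite Hg // H0. ring. Qed.

Lemma stD_zero E V a b vtx B f v0 :
  is_metric_graph E V a b vtx -> connected E V vtx -> B v0 = true -> (v0 < V)%coq_nat ->
  ker_stD E V a b vtx B f -> eq_on_edges E a b f (fun _ _ => 0).
Proof.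
move=> Hg Hc HB0 Hv0 [df [Hh Hv]].
have [Hab [Hvtx _]] := Hg.
have Hen : forall v, (v < V)%coq_nat ->
     sumR (endpoints_of E vtx v) (fun j => endval a b f j * endder a b df j) = 0.
{ move=> v Hv'. have := Hv v Hv'. case: (B v) => [H|[Heq Hs]].
  - apply: sumR_zero => j Hj. rewrite H //. ring.
  - remember (endpoints_of E vtx v) as l. case: l Heql Heq Hs => [|j0 l] Hl Heq Hs; first by [].
    rewrite (sumR_ext _ _ (fun j => endval a b f j0 * endder a b df j)).
    + rewrite sumR_mul Hs. ring.
    + move=> j Hj. rewrite (Heq j j0) //. by left. }
have Hd0 := energy _ _ _ _ _ _ _ Hg Hh Hen.
have Hc1 : forall n, (n < E)%coq_nat -> forall x, a n <= x <= b n -> f n x = f n (a n).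
{ move=> n Hn. apply: harm_const; [exact: Hab|exact: Hh|exact: Hd0]. }
have Hpair : forall n, (n < E)%coq_nat ->
   endval a b f (2 * n + 1)%coq_nat = endval a b f (2 * n)%coq_nat.
{ move=> n Hn. rewrite endval_2n' endval_2n1'. apply: Hc1 => //. have := Hab n Hn. lra. }
have Hprop : forall k, (k < 2 * E)%coq_nat -> endval a b f k = 0 ->
   forall j, (j < 2 * E)%coq_nat -> vtx j = vtx k -> endval a b f j = 0.
{ move=> k Hk Hk0 j Hj Hjk. have HV := Hvtx k Hk. have := Hv (vtx k) HV.
  case: (B (vtx k)) => [H|[Heq _]].
  - apply: H. by apply/in_endpoints.
  - rewrite -Hk0. apply: Heq; by apply/in_endpoints. }
have Hreach : forall w, reach E vtx v0 w ->
   forall j, (j < 2 * E)%coq_nat -> vtx j = w -> endval a b f j = 0.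
{ move=> w; elim=> [|w' x n Hr IH Hn Hor].
  - move=> j Hj Hjv. have := Hv v0 Hv0. rewrite HB0 => H. apply: H. by apply/in_endpoints.
  - case: Hor => [[H1 H2]|[H1 H2]] j Hj Hjx.
    + apply: (Hprop (2 * n + 1)%coq_nat); [lia| |exact Hj|by rewrite Hjx -H2].
      rewrite Hpair //. apply: IH => //. lia.
    + apply: (Hprop (2 * n)%coq_nat); [lia| |exact Hj|by rewrite Hjx -H2].
      rewrite -Hpair //. apply: IH => //. lia. }
move=> n x Hn Hx. have Hn' := Hn.
rewrite (Hc1 n Hn' x Hx) -(endval_2n' a b).
have H2n : (2 * n < 2 * E)%coq_nat by lia.
apply: (Hreach (vtx (2 * n)%coq_nat)) => //.
apply: Hc => //. exact: Hvtx.
Qed.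

Definition Nmx E V (vtx : nat -> nat) (B : nat -> bool) : 'M[R]_(E, V) :=
  \matrix_(n < E, v < V) (if B v then 0 else ((vtx (2 * n)%N == v) + (vtx (2 * n + 1)%N == v))%N%:R)%R.

Lemma vsum E V vtx (B : nat -> bool) (v : 'I_V) (g h : nat -> R) : B v = false ->
  (forall n, (n < E)%N -> h (2 * n)%N = g n /\ h (2 * n + 1)%N = g n) ->
  sumR (endpoints_of E vtx v) h = (\sum_(n < E) g n * Nmx E V vtx B n v)%R.
Proof.
move=> HB Hh.
rewrite sumR_endpoints big_mkcond /= sum_pairs big_mkord. apply: eq_bigr => n _.
rewrite mxE HB. have [H1 H2] := Hh n (ltn_ord n). rewrite H1 H2 natrD mulrDr.
by case: (vtx (2 * n)%N == v); case: (vtx (2 * n + 1)%N == v); rewrite /= ?mulr1 ?mulr0 ?addr0 ?add0r.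
Qed.

Lemma astN_ker E V a b vtx (B : nat -> bool) f : is_metric_graph E V a b vtx ->
  ker_astN E V a b vtx B f ->
  (forall n, (n < E)%coq_nat -> forall x, a n <= x <= b n -> f n x = f n (a n)) /\
  ((\row_(n < E) f n (a n)) *m Nmx E V vtx B = 0)%R.
Proof.
move=> Hg [df [Hh Hv]].
have [Hab [Hvtx _]] := Hg.
have Hen : forall v, (v < V)%coq_nat ->
     sumR (endpoints_of E vtx v) (fun j => endval a b f j * endder a b df j) = 0.
{ move=> v Hv'. have := Hv v Hv'. case: (B v) => [H|[Hs Heq]].
  - apply: sumR_zero => j Hj. rewrite H //. ring.
  - remember (endpoints_of E vtx v) as l. case: l Heql Heq Hs => [|j0 l] Hl Heq Hs; first by [].
    rewrite (sumR_ext _ _ (fun j => endder a b df j0 * endval a b f j)).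
    + rewrite sumR_mul Hs. ring.
    + move=> j Hj. rewrite (Heq j j0) //; first ring. by left. }
have Hd0 := energy _ _ _ _ _ _ _ Hg Hh Hen.
have Hc1 : forall n, (n < E)%coq_nat -> forall x, a n <= x <= b n -> f n x = f n (a n).
{ move=> n Hn. apply: harm_const; [exact: Hab|exact: Hh|exact: Hd0]. }
split; first exact Hc1.
apply/rowP => v. rewrite !mxE. under eq_bigr do rewrite mxE.
case HBv: (B v).
- apply: big1 => n _. by rewrite mxE HBv mulr0.
- have Hv' : (v < V)%coq_nat by apply/ltP.
  have := Hv v Hv'. rewrite HBv => -[Hs _].
  rewrite -(vsum E V vtx B v (fun n => f n (a n)) (endval a b f)) //.
  move=> n Hn. rewrite endval_2n endval_2n1. split => //.
  have Hn' : (n < E)%coq_nat by apply/ltP.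
  apply: Hc1 => //. have := Hab n Hn'. lra.
Qed.

Section Rank.
Variables (E V : nat) (vtx : nat -> nat) (B : nat -> bool).
Local Notation N := (Nmx E V vtx B).

Definition zf (y : 'rV[R]_V) (w : nat) : R :=
  (\sum_(v < V) (if B v then 0 else y 0 v * (w == v)%:R))%R.

Lemma zf_val y (v : 'I_V) : zf y v = (if B v then 0 else y 0 v)%R.
Proof.
rewrite /zf (bigD1 v) //= big1 ?addr0.
- by case: (B v); rewrite // eqxx mulr1.
- move=> u Hu. case: (B u) => //. have -> : (val v == val u) = false.
    by apply/negbTE; move: Hu; apply: contra => /eqP H; apply/eqP/val_inj.
  by rewrite mulr0.
Qed.

Lemma entry_yN (y : 'rV[R]_V) (n : 'I_E) :
  ((y *m N^T) 0 n = zf y (vtx (2 * n)%N) + zf y (vtx (2 * n + 1)%N))%R.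
Proof.
rewrite !mxE /zf -big_split /=. apply: eq_bigr => v _.
rewrite !mxE. case: (B v); first by rewrite mulr0 addr0.
by rewrite natrD mulrDr.
Qed.

Lemma zprop (v0 : nat) (y : 'rV[R]_V) :
  (forall j, (j < 2 * E)%coq_nat -> (vtx j < V)%coq_nat) ->
  connected E V vtx -> B v0 = true -> (v0 < V)%coq_nat -> (y *m N^T = 0)%R ->
  forall v : 'I_V, B v = false -> y ord0 v = 0%R.
Proof.
move=> Hvtx Hc HB0 Hv0 Hy.
have Hr : forall w, reach E vtx v0 w -> zf y w = 0%R.
{ move=> w0; elim=> [|w x n Hr IH Hn Hor].
  - have Hv0' : (v0 < V)%N by apply/ltP.
    have := zf_val y (Ordinal Hv0'). rewrite /= HB0 => ->. by [].
  - have Hn' : (n < E)%N by apply/ltP.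
    have := entry_yN y (Ordinal Hn'). rewrite Hy mxE /=.
    case: Hor => [[H1 H2]|[H1 H2]].
    + have -> : vtx (2 * n)%N = w by rewrite -H1.
      have -> : vtx (2 * n + 1)%N = x by rewrite -H2.
      rewrite IH add0r. by move=> ->.
    + have -> : vtx (2 * n)%N = x by rewrite -H2.
      have -> : vtx (2 * n + 1)%N = w by rewrite -H1.
      rewrite IH addr0. by move=> ->. }
move=> v Hv. have := zf_val y v. rewrite Hv => <-.
apply: Hr. apply: Hc => //. by apply/ltP.
Qed.

Definition Bp : {pred 'I_V} := fun v => B v.
Definition Smx : 'M[R]_(#|Bp|, V) := \matrix_(i, v) ((v == enum_val i)%:R)%R.

Lemma SN : (Smx *m N^T = 0)%R.
Proof.
apply/matrixP => i n. rewrite !mxE. apply: big1 => v _.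
rewrite !mxE. case: eqP => [->|_]; last by rewrite mul0r.
have := enum_valP i. rewrite /Bp unfold_in => ->. by rewrite mulr0.
Qed.

Lemma SS : (Smx *m Smx^T = 1%:M)%R.
Proof.
apply/matrixP => i j. rewrite !mxE (bigD1 (enum_val i)) //= big1 ?addr0.
- rewrite !mxE eqxx mul1r (inj_eq enum_val_inj). by case: (i == j).
- move=> v Hv. by rewrite !mxE (negbTE Hv) mul0r.
Qed.

Lemma rankS : \rank Smx = #|Bp|.
Proof.
apply/eqP. rewrite eqn_leq rank_leq_row /=.
have := mxrankM_maxl Smx Smx^T. by rewrite SS mxrank1.
Qed.

Lemma delta_S (v : 'I_V) : B v -> ((delta_mx ord0 v : 'rV[R]_V) <= Smx)%MS.
Proof.
move=> Hv. have Hv' : v \in Bp by rewrite unfold_in.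
have <- : row (enum_rank_in Hv' v) Smx = (delta_mx ord0 v : 'rV[R]_V).
{ apply/rowP => u. rewrite !mxE (enum_rankK_in Hv' Hv'). by []. }
exact: row_sub.
Qed.

Lemma ysub v0 (y : 'rV[R]_V) :
  (forall j, (j < 2 * E)%coq_nat -> (vtx j < V)%coq_nat) ->
  connected E V vtx -> B v0 = true -> (v0 < V)%coq_nat -> (y *m N^T = 0)%R ->
  (y <= Smx)%MS.
Proof.
move=> Hvtx Hc HB0 Hv0 Hy.
have Hz := zprop v0 y Hvtx Hc HB0 Hv0 Hy.
have -> : y = (\sum_(v : 'I_V | B v) y ord0 v *: (delta_mx ord0 v : 'rV[R]_V))%R.
{ apply/matrixP => i u. rewrite summxE (ord1 i). under eq_bigr do rewrite !mxE eqxx /=.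
  case HBu: (B u).
  - rewrite (bigD1 u) //= big1 ?addr0; first by rewrite eqxx mulr1.
    move=> v /andP [_ Hv]. by rewrite eq_sym (negbTE Hv) mulr0.
  - rewrite Hz // big1 // => v Hv. have -> : (u == v) = false.
    { apply/negbTE; apply/eqP => Huv. by rewrite Huv Hv in HBu. }
    by rewrite mulr0. }
apply: summx_sub => v Hv. apply: scalemx_sub. exact: delta_S.
Qed.

Lemma rankN v0 :
  (forall j, (j < 2 * E)%coq_nat -> (vtx j < V)%coq_nat) ->
  connected E V vtx -> B v0 = true -> (v0 < V)%coq_nat ->
  (\rank N + #|Bp| = V)%N.
Proof.
move=> Hvtx Hc HB0 Hv0.
have K : \rank (kermx N^T) = #|Bp|.
{ apply/eqP; rewrite eqn_leq; apply/andP; split.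
  - rewrite -rankS. apply: mxrankS. apply/row_subP => i.
    apply: (ysub v0) => //. apply/sub_kermxP. exact: row_sub.
  - rewrite -{1}rankS. apply: mxrankS. apply/sub_kermxP. exact: SN. }
have := mxrank_ker N^T. rewrite K mxrank_tr.
have := rank_leq_row N^T. rewrite mxrank_tr. lia.
Qed.
End Rank.

Lemma cardB V B : card_B V B = #|Bp V B|.
Proof.
rewrite /card_B filter_eqL seq_iota -val_enum_ord cardE /enum_mem.
change (length ?x) with (size x). rewrite !size_filter count_map count_filter. apply: eq_count => v. by rewrite /= andbT.
Qed.

Definition mget p q (M : 'M[R]_(p, q)) (i n : nat) : R :=
  match (insub i : option 'I_p), (insub n : option 'I_q) with
  | Some i', Some n' => M i' n'
  | _, _ => 0
  end.
Arguments mget {p q}.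

Lemma mget_ord p q (M : 'M[R]_(p, q)) (i : 'I_p) (j : 'I_q) : mget M i j = M i j.
Proof. by rewrite /mget !valK. Qed.
Arguments mget_ord {p q}.

Lemma sumR_seq d (F : nat -> R) : sumR (List.seq 0 d) F = (\sum_(i < d) F i)%R.
Proof. by rewrite sumR_big seq_iota -(big_mkord xpredT) /index_iota subn0. Qed.

Lemma const_harm a b (c : R) : edge_harmonic a b (fun _ => c) (fun _ => 0).
Proof.
split; [|split].
- move=> x. exact: (derivable_pt_lim_const c x).
- move=> x. exists 0. exact: (derivable_pt_lim_const 0 x).
- move=> x _. exact: (derivable_pt_lim_const 0 x).
Qed.

Lemma endder0 a b j : endder a b (fun _ _ => 0) j = 0.
Proof. rewrite /endder. case: (Nat.even j) => //. lra. Qed.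

Lemma part2 E V a b vtx (B : nat -> bool) v0 :
  is_metric_graph E V a b vtx -> connected E V vtx -> B v0 = true -> (v0 < V)%coq_nat ->
  exists d : nat, has_dim E a b (ker_astN E V a b vtx B) d /\
     (d + V = E + card_B V B)%coq_nat.
Proof.
move=> Hg Hc HB0 Hv0.
have [Hab [Hvtx _]] := Hg.
have Hvtx' : forall j, (j < 2 * E)%coq_nat -> (vtx j < V)%coq_nat by exact: Hvtx.
set N := Nmx E V vtx B.
set K := kermx N.
set rb := row_base K.
have HrbK : (rb <= K)%MS by rewrite /rb eq_row_base.
exists (\rank K). split.
- exists (fun i n x => mget rb i n). split; [|split].
  + move=> i Hi. have Hi' : (i < \rank K)%N by apply/ltP.
    exists (fun _ _ => 0). split.
    * move=> n Hn. exact: const_harm.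
    * move=> v Hv. case HBv: (B v).
      -- move=> j _. exact: endder0.
      -- split; last by move=> i0 j0 _ _; rewrite !endder0.
         have Hv' : (v < V)%N by apply/ltP.
         rewrite (vsum E V vtx B (Ordinal Hv') (fun n => mget rb i n)) //.
         ++ have Hrow : (row (Ordinal Hi') rb *m N = 0)%R.
            { apply/sub_kermxP. exact: submx_trans (row_sub _ _) HrbK. }
            have := congr1 (fun M : 'M[R]_(1, V) => M ord0 (Ordinal Hv')) Hrow.
            rewrite !mxE /= => H. etransitivity; last exact H. apply: eq_bigr => n _.
            by rewrite (mget_ord rb (Ordinal Hi') n) !mxE.
         ++ move=> n Hn. by rewrite endval_2n endval_2n1.
  + move=> f Hf. have [Hc1 HcN] := astN_ker _ _ _ _ _ _ _ Hg Hf.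
    set c := (\row_(n < E) f n (a n))%R in HcN.
    have HcK : (c <= rb)%MS.
    { rewrite /rb eq_row_base. by apply/sub_kermxP. }
    have [w Hw] := submxP HcK.
    exists (fun i => mget w 0 i).
    move=> n x Hn Hx. rewrite /lincomb sumR_seq.
    have Hn' : (n < E)%N by apply/ltP.
    rewrite (Hc1 n Hn x Hx).
    have -> : f n (a n) = c ord0 (Ordinal Hn') by rewrite mxE.
    rewrite Hw mxE. apply: eq_bigr => i _.
    by rewrite -(mget_ord w ord0 i) -(mget_ord rb i (Ordinal Hn')).
  + move=> c Hc0 i Hi.
    set w := ((\row_(i < \rank K) c i)%R : 'rV[R]_(\rank K)).
    have Hw : (w *m rb = 0 *m rb)%R.
    { rewrite mul0mx. apply/rowP => n. rewrite !mxE.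
      have := Hc0 n (a n) (ltP (ltn_ord n)).
      rewrite /lincomb sumR_seq => H.
      rewrite -[RHS]/(0 : R) -[X in _ = X]H; last by have := Hab n (ltP (ltn_ord n)); lra.
      apply: eq_bigr => j _. by rewrite mxE (mget_ord rb j n). }
    have Hw0 := row_free_inj (row_base_free K) Hw.
    have Hi' : (i < \rank K)%N by apply/ltP.
    have := congr1 (fun M : 'M[R]_(1, \rank K) => M ord0 (Ordinal Hi')) Hw0. by rewrite !mxE.
- have HK := mxrank_ker N.
  have HR := rankN E V vtx B v0 Hvtx' Hc HB0 Hv0.
  have HE := rank_leq_row N.
  rewrite /K HK cardB. rewrite /N in HE *. lia.
Qed.

End Work.

Theorem mainTheorem8 (E V : nat) (a b : nat -> R) (vtx : nat -> nat) (B : nat -> bool) :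
  is_metric_graph E V a b vtx ->
  connected E V vtx ->
  bipartite E vtx ->
  (forall v, B v = true -> (v < V)%nat /\ degree E vtx v = 1%nat) ->
  (exists v, B v = true) ->
  has_dim E a b (ker_stD E V a b vtx B) 0 /\
  (exists d : nat,
     has_dim E a b (ker_astN E V a b vtx B) d /\
     Z.of_nat d = (betti E V + Z.of_nat (card_B V B) - 1)%Z).
Proof.
  intros Hg Hc Hbip HB [v0 Hv0].
  destruct (HB v0 Hv0) as [Hlt _].
  split.
  { exists (fun _ _ _ => 0). split; [intros i Hi; exfalso; Lia.lia | split].
    { intros f Hf. exists (fun _ => 0). intros n x Hn Hx.
      rewrite (Work.stD_zero E V a b vtx B f v0 Hg Hc Hv0 Hlt Hf n x Hn Hx).
      reflexivity. }
    { intros c _ i Hi. exfalso; Lia.lia. } }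
  { destruct (Work.part2 E V a b vtx B v0 Hg Hc Hv0 Hlt) as [d [Hd Hn]].
    exists d. split; [exact Hd|]. unfold betti. Lia.lia. }
Qed.
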